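(* Let $M^2$ be a surface in $\mathbb E^4$ without flat points, i.e. $(k,\varkappa)\neq(0,0)$ at every point. Then at any point $p$ the mean curvature vector $H=\frac12\operatorname{tr}\sigma$ vanishes if and only if $\varkappa^2-k=0$ at $p$. In particular, $M^2$ is minimal if and only if $\varkappa^2-k=0$ on $M^2$.
   Context: $\mathbb E^4$ carries the standard metric $g$. For a surface $M^2$ parametrized by $z(u,v)$, with $E=g(z_u,z_u)$, $F=g(z_u,z_v)$, $G=g(z_v,z_v)$, $W=\sqrt{EG-F^2}$, second fundamental form $\sigma$, and an orthonormal normal frame $\{e_1,e_2\}$, write $\sigma(z_u,z_u)=c_{11}^1e_1+c_{11}^2e_2$, $\sigma(z_u,z_v)=c_{12}^1e_1+c_{12}^2e_2$, $\sigma(z_v,z_v)=c_{22}^1e_1+c_{22}^2e_2$; put $\Delta_1=c_{11}^1c_{12}^2-c_{11}^2c_{12}^1$, $\Delta_2=c_{11}^1c_{22}^2-c_{11}^2c_{22}^1$, $\Delta_3=c_{12}^1c_{22}^2-c_{12}^2c_{22}^1$, $L=2\Delta_1/W$, $M=\Delta_2/W$, $N=2\Delta_3/W$, and $k=\frac{LN-M^2}{EG-F^2}$, $\varkappa=\frac{EN+GL-2FM}{2(EG-F^2)}$ (these are independent of parametrization and normal frame, $\varkappa$ up to sign). A point is flat if $k=\varkappa=0$. *)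

(* Defs.v *)
From Stdlib Require Import Reals.
Open Scope R_scope.

Record V4 := mkV4 { x1 : R; x2 : R; x3 : R; x4 : R }.

Definition v0 : V4 := mkV4 0 0 0 0.
Definition vadd (a b : V4) : V4 :=
  mkV4 (x1 a + x1 b) (x2 a + x2 b) (x3 a + x3 b) (x4 a + x4 b).
Definition vscal (r : R) (a : V4) : V4 :=
  mkV4 (r * x1 a) (r * x2 a) (r * x3 a) (r * x4 a).
Definition g (a b : V4) : R :=
  x1 a * x1 b + x2 a * x2 b + x3 a * x3 b + x4 a * x4 b.

Definition pderiv_u (f df : R -> R -> V4) (u v : R) : Prop :=
  derivable_pt_lim (fun t => x1 (f t v)) u (x1 (df u v)) /\
  derivable_pt_lim (fun t => x2 (f t v)) u (x2 (df u v)) /\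
  derivable_pt_lim (fun t => x3 (f t v)) u (x3 (df u v)) /\
  derivable_pt_lim (fun t => x4 (f t v)) u (x4 (df u v)).
Definition pderiv_v (f df : R -> R -> V4) (u v : R) : Prop :=
  derivable_pt_lim (fun t => x1 (f u t)) v (x1 (df u v)) /\
  derivable_pt_lim (fun t => x2 (f u t)) v (x2 (df u v)) /\
  derivable_pt_lim (fun t => x3 (f u t)) v (x3 (df u v)) /\
  derivable_pt_lim (fun t => x4 (f u t)) v (x4 (df u v)).

(** Pointwise invariants, from the first derivatives zu zv, second
    derivatives zuu zuv zvv and an orthonormal normal frame e1 e2 at a point. *)
Section Invariants.
Variables zu zv zuu zuv zvv e1 e2 : V4.

Definition E_ := g zu zu.
Definition F_ := g zu zv.
Definition G_ := g zv zv.
Definition W := sqrt (E_ * G_ - F_ ^ 2).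

(** coefficients of the second fundamental form: sigma(z_i,z_j) is the normal
    component of z_ij, i.e. g(z_ij,e1) e1 + g(z_ij,e2) e2 *)
Definition c11_1 := g zuu e1.
Definition c11_2 := g zuu e2.
Definition c12_1 := g zuv e1.
Definition c12_2 := g zuv e2.
Definition c22_1 := g zvv e1.
Definition c22_2 := g zvv e2.

Definition sigma_uu : V4 := vadd (vscal c11_1 e1) (vscal c11_2 e2).
Definition sigma_uv : V4 := vadd (vscal c12_1 e1) (vscal c12_2 e2).
Definition sigma_vv : V4 := vadd (vscal c22_1 e1) (vscal c22_2 e2).

Definition Delta1 := c11_1 * c12_2 - c11_2 * c12_1.
Definition Delta2 := c11_1 * c22_2 - c11_2 * c22_1.
Definition Delta3 := c12_1 * c22_2 - c12_2 * c22_1.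

Definition L_ := 2 * Delta1 / W.
Definition M_ := Delta2 / W.
Definition N_ := 2 * Delta3 / W.

Definition kcurv := (L_ * N_ - M_ ^ 2) / (E_ * G_ - F_ ^ 2).
Definition varkappa := (E_ * N_ + G_ * L_ - 2 * F_ * M_) / (2 * (E_ * G_ - F_ ^ 2)).

(** mean curvature vector H = (1/2) tr sigma
      = (G sigma(zu,zu) - 2F sigma(zu,zv) + E sigma(zv,zv)) / (2 (EG - F^2)) *)
Definition Hmean : V4 :=
  vscal (/ (2 * (E_ * G_ - F_ ^ 2)))
    (vadd (vadd (vscal G_ sigma_uu) (vscal (-2 * F_) sigma_uv))
          (vscal E_ sigma_vv)).

End Invariants.

Definition surface_data (D : R -> R -> Prop)
  (z zu zv zuu zuv zvv e1 e2 : R -> R -> V4) : Prop :=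
  forall u v, D u v ->
    pderiv_u z zu u v /\ pderiv_v z zv u v /\
    pderiv_u zu zuu u v /\ pderiv_v zu zuv u v /\ pderiv_v zv zvv u v /\
    0 < E_ (zu u v) * G_ (zv u v) - F_ (zu u v) (zv u v) ^ 2 /\
    g (e1 u v) (e1 u v) = 1 /\ g (e2 u v) (e2 u v) = 1 /\ g (e1 u v) (e2 u v) = 0 /\
    g (e1 u v) (zu u v) = 0 /\ g (e1 u v) (zv u v) = 0 /\
    g (e2 u v) (zu u v) = 0 /\ g (e2 u v) (zv u v) = 0.

(* Main.v *)
Require Import Defs.
From Stdlib Require Import Reals.
Open Scope R_scope.
From Stdlib Require Import Lra Psatz.

Lemma keyalg (E F G a1 a2 b1 b2 c1 c2 : R) :
  0 < E -> 0 < E*G - F^2 ->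
  ~ (a1*b2-a2*b1 = 0 /\ a1*c2-a2*c1 = 0 /\ b1*c2-b2*c1 = 0) ->
  ((E*(b1*c2-b2*c1)+G*(a1*b2-a2*b1)-F*(a1*c2-a2*c1))^2
    - (E*G-F^2)*(4*(a1*b2-a2*b1)*(b1*c2-b2*c1)-(a1*c2-a2*c1)^2) = 0
  <-> (G*a1-2*F*b1+E*c1 = 0 /\ G*a2-2*F*b2+E*c2 = 0)).
Proof.
  intros HE HD Hnf.
  set (D1 := a1*b2-a2*b1). set (D2 := a1*c2-a2*c1). set (D3 := b1*c2-b2*c1).
  set (u := E*D2 - 2*F*D1). set (w := E*D3 - G*D1).
  assert (Hid : E^2 * ((E*D3+G*D1-F*D2)^2 - (E*G-F^2)*(4*D1*D3-D2^2))
              = (E*w - F*u)^2 + (E*G-F^2)*u^2) by (unfold u, w; ring).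
  set (h1 := G*a1-2*F*b1+E*c1). set (h2 := G*a2-2*F*b2+E*c2).
  split.
  - intro HQ. rewrite HQ in Hid.
    assert (S1 : 0 <= (E*w - F*u)^2) by apply pow2_ge_0.
    assert (S2 : 0 <= u^2) by apply pow2_ge_0.
    assert (S3 : 0 <= (E*G-F^2)*u^2) by (apply Rmult_le_pos; lra).
    assert (Hu2 : (E*G-F^2)*u^2 = 0) by lra.
    assert (Hu : u = 0).
    { apply Rmult_integral in Hu2. destruct Hu2 as [Hx|Hx]; [lra|].
      nra. }
    assert (Hw0 : (E*w - F*u)^2 = 0) by lra.
    assert (Hw1 : E*w - F*u = 0) by nra. rewrite Hu in Hw1.
    assert (Hw : w = 0).
    { apply (Rmult_eq_reg_l E); lra. }
    assert (Ha : h1*a2 - h2*a1 = -u) by (unfold h1,h2,u,D1,D2; ring).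
    assert (Hb : h1*b2 - h2*b1 = -w) by (unfold h1,h2,w,D1,D3; ring).
    assert (Hc0 : E*(h1*c2 - h2*c1) = G*u - 2*F*w) by (unfold h1,h2,u,w,D1,D2,D3; ring).
    assert (Hc : h1*c2 - h2*c1 = 0).
    { rewrite Hu, Hw in Hc0. apply (Rmult_eq_reg_l E); [lra|lra]. }
    rewrite Hu in Ha; rewrite Hw in Hb.
    assert (P1 : h1*D1 = 0) by (replace (h1*D1) with (a1*(h1*b2-h2*b1) - b1*(h1*a2-h2*a1)) by (unfold D1; ring); rewrite Hb, Ha; ring).
    assert (P2 : h2*D1 = 0) by (replace (h2*D1) with (a2*(h1*b2-h2*b1) - b2*(h1*a2-h2*a1)) by (unfold D1; ring); rewrite Hb, Ha; ring).
    assert (P3 : h1*D2 = 0) by (replace (h1*D2) with (a1*(h1*c2-h2*c1) - c1*(h1*a2-h2*a1)) by (unfold D2; ring); rewrite Hc, Ha; ring).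
    assert (P4 : h2*D2 = 0) by (replace (h2*D2) with (a2*(h1*c2-h2*c1) - c2*(h1*a2-h2*a1)) by (unfold D2; ring); rewrite Hc, Ha; ring).
    assert (P5 : h1*D3 = 0) by (replace (h1*D3) with (b1*(h1*c2-h2*c1) - c1*(h1*b2-h2*b1)) by (unfold D3; ring); rewrite Hc, Hb; ring).
    assert (P6 : h2*D3 = 0) by (replace (h2*D3) with (b2*(h1*c2-h2*c1) - c2*(h1*b2-h2*b1)) by (unfold D3; ring); rewrite Hc, Hb; ring).
    destruct (Req_dec D1 0) as [z1|z1]; [destruct (Req_dec D2 0) as [z2|z2];
      [destruct (Req_dec D3 0) as [z3|z3]|]|].
    + exfalso; apply Hnf; auto.
    + split; apply (Rmult_eq_reg_r D3); lra.
    + split; apply (Rmult_eq_reg_r D2); lra.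
    + split; apply (Rmult_eq_reg_r D1); lra.
  - intros [H1 H2].
    assert (Hu : u = 0).
    { assert (u = -(h1*a2 - h2*a1)) by (unfold h1,h2,u,D1,D2; ring). rewrite H, H1, H2; ring. }
    assert (Hw : w = 0).
    { assert (w = -(h1*b2 - h2*b1)) by (unfold h1,h2,w,D1,D3; ring). rewrite H, H1, H2; ring. }
    rewrite Hu, Hw in Hid.
    assert (E^2 <> 0) by (apply pow_nonzero; lra).
    apply (Rmult_eq_reg_l (E^2)); [lra|auto].
Qed.

Lemma point (zu zv zuu zuv zvv e1 e2 : V4) :
  0 < E_ zu * G_ zv - F_ zu zv ^ 2 ->
  g e1 e1 = 1 -> g e2 e2 = 1 -> g e1 e2 = 0 ->
  ~ (kcurv zu zv zuu zuv zvv e1 e2 = 0 /\ varkappa zu zv zuu zuv zvv e1 e2 = 0) ->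
  (Hmean zu zv zuu zuv zvv e1 e2 = v0 <->
   varkappa zu zv zuu zuv zvv e1 e2 ^ 2 - kcurv zu zv zuu zuv zvv e1 e2 = 0).
Proof.
  intros HD n1 n2 n12 Hnf.
  unfold Hmean, varkappa, kcurv, L_, M_, N_, Delta1, Delta2, Delta3, sigma_uu, sigma_uv, sigma_vv in *.
  fold (W zu zv) in *.
  set (E := E_ zu) in *. set (F := F_ zu zv) in *. set (G := G_ zv) in *.
  set (a1 := c11_1 zuu e1) in *. set (a2 := c11_2 zuu e2) in *.
  set (b1 := c12_1 zuv e1) in *. set (b2 := c12_2 zuv e2) in *.
  set (c1 := c22_1 zvv e1) in *. set (c2 := c22_2 zvv e2) in *.
  set (Wv := W zu zv) in *.
  assert (HW : Wv * Wv = E*G - F^2) by (unfold Wv, W; fold E F G; apply sqrt_sqrt; lra).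
  assert (HWp : 0 < Wv) by (unfold Wv, W; apply sqrt_lt_R0; fold E F G; lra).
  assert (HE0 : 0 <= E) by (unfold E, E_, g; nra).
  assert (HE : 0 < E).
  { destruct (Req_dec E 0) as [e|e]; [|lra]. rewrite e in HD. nra. }
  idtac.
  set (Dl := E*G - F^2) in *.
  assert (HDl : Dl <> 0) by lra.
  assert (HWn : Wv <> 0) by lra.
  set (D1 := a1*b2-a2*b1) in *. set (D2 := a1*c2-a2*c1) in *. set (D3 := b1*c2-b2*c1) in *.
  assert (Kc : (2 * D1 / Wv * (2 * D3 / Wv) - (D2 / Wv) ^ 2) / Dl = (4*D1*D3 - D2^2)/(Dl*Dl)).
  { rewrite <- HW. field. auto. }
  assert (Vk : (E * (2 * D3 / Wv) + G * (2 * D1 / Wv) - 2 * F * (D2 / Wv)) / (2 * Dl)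
             = (E*D3+G*D1-F*D2)/(Dl*Wv)).
  { field. auto. }
  rewrite Kc, Vk in *.
  assert (Dif : ((E*D3+G*D1-F*D2)/(Dl*Wv))^2 - (4*D1*D3 - D2^2)/(Dl*Dl)
     = ((E*D3+G*D1-F*D2)^2 - Dl*(4*D1*D3-D2^2)) / (Dl*Dl*Dl)).
  { unfold Rdiv. rewrite Rpow_mult_distr, pow_inv, Rpow_mult_distr.
    replace (Wv^2) with Dl by (rewrite <- HW; ring). field. auto. }
  rewrite Dif.
  assert (Hnz : ~ (D1 = 0 /\ D2 = 0 /\ D3 = 0)).
  { intros [z1 [z2 z3]]. apply Hnf. rewrite z1, z2, z3. split; unfold Rdiv; ring. }
  pose proof (keyalg E F G a1 a2 b1 b2 c1 c2 HE HD Hnz) as K.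
  fold D1 D2 D3 Dl in K.
  assert (Dv : forall X, X / (Dl*Dl*Dl) = 0 <-> X = 0).
  { intro X. split; intro H0.
    - assert (X = X / (Dl*Dl*Dl) * (Dl*Dl*Dl)) by (field; auto). rewrite H, H0; ring.
    - rewrite H0; unfold Rdiv; ring. }
  rewrite Dv, K.
  set (h1 := G * a1 - 2 * F * b1 + E * c1). set (h2 := G * a2 - 2 * F * b2 + E * c2).
  assert (Hs : / (2*Dl) <> 0) by (apply Rinv_neq_0_compat; lra).
  split.
  - intro HM.
    assert (G1 : g (vscal (/ (2 * Dl))
       (vadd (vadd (vscal G (vadd (vscal a1 e1) (vscal a2 e2)))
          (vscal (-2 * F) (vadd (vscal b1 e1) (vscal b2 e2))))
       (vscal E (vadd (vscal c1 e1) (vscal c2 e2))))) e1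
       = / (2*Dl) * (h1 * g e1 e1 + h2 * g e1 e2)).
    { unfold g, vscal, vadd, h1, h2; simpl; ring. }
    assert (G2 : g (vscal (/ (2 * Dl))
       (vadd (vadd (vscal G (vadd (vscal a1 e1) (vscal a2 e2)))
          (vscal (-2 * F) (vadd (vscal b1 e1) (vscal b2 e2))))
       (vscal E (vadd (vscal c1 e1) (vscal c2 e2))))) e2
       = / (2*Dl) * (h1 * g e1 e2 + h2 * g e2 e2)).
    { unfold g, vscal, vadd, h1, h2; simpl; ring. }
    rewrite HM in G1, G2. rewrite n1, n12 in G1. rewrite n12, n2 in G2.
    unfold g, v0 in G1, G2; simpl in G1, G2.
    split.
    + apply (Rmult_eq_reg_l (/ (2*Dl))); [lra|auto].
    + apply (Rmult_eq_reg_l (/ (2*Dl))); [lra|auto].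
  - intros [H1 H2].
    unfold v0, vscal, vadd; simpl. f_equal.
    + transitivity (/ (2*Dl) * (h1 * x1 e1 + h2 * x1 e2)); [unfold h1, h2; ring|rewrite H1, H2; ring].
    + transitivity (/ (2*Dl) * (h1 * x2 e1 + h2 * x2 e2)); [unfold h1, h2; ring|rewrite H1, H2; ring].
    + transitivity (/ (2*Dl) * (h1 * x3 e1 + h2 * x3 e2)); [unfold h1, h2; ring|rewrite H1, H2; ring].
    + transitivity (/ (2*Dl) * (h1 * x4 e1 + h2 * x4 e2)); [unfold h1, h2; ring|rewrite H1, H2; ring].
Qed.
Theorem proposition4p1 (D : R -> R -> Prop)
  (z zu zv zuu zuv zvv e1 e2 : R -> R -> V4)
  (Hsurf : surface_data D z zu zv zuu zuv zvv e1 e2)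
  (Hnoflat : forall u v, D u v ->
     ~ (kcurv (zu u v) (zv u v) (zuu u v) (zuv u v) (zvv u v) (e1 u v) (e2 u v) = 0 /\
        varkappa (zu u v) (zv u v) (zuu u v) (zuv u v) (zvv u v) (e1 u v) (e2 u v) = 0)) :
  (forall u v, D u v ->
     (Hmean (zu u v) (zv u v) (zuu u v) (zuv u v) (zvv u v) (e1 u v) (e2 u v) = v0 <->
      varkappa (zu u v) (zv u v) (zuu u v) (zuv u v) (zvv u v) (e1 u v) (e2 u v) ^ 2
      - kcurv (zu u v) (zv u v) (zuu u v) (zuv u v) (zvv u v) (e1 u v) (e2 u v) = 0)) /\
  ((forall u v, D u v ->
      Hmean (zu u v) (zv u v) (zuu u v) (zuv u v) (zvv u v) (e1 u v) (e2 u v) = v0) <->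
   (forall u v, D u v ->
      varkappa (zu u v) (zv u v) (zuu u v) (zuv u v) (zvv u v) (e1 u v) (e2 u v) ^ 2
      - kcurv (zu u v) (zv u v) (zuu u v) (zuv u v) (zvv u v) (e1 u v) (e2 u v) = 0)).
Proof.
  assert (P : forall u v, D u v ->
     (Hmean (zu u v) (zv u v) (zuu u v) (zuv u v) (zvv u v) (e1 u v) (e2 u v) = v0 <->
      varkappa (zu u v) (zv u v) (zuu u v) (zuv u v) (zvv u v) (e1 u v) (e2 u v) ^ 2
      - kcurv (zu u v) (zv u v) (zuu u v) (zuv u v) (zvv u v) (e1 u v) (e2 u v) = 0)).
  { intros u v Huv.
    destruct (Hsurf u v Huv) as (_ & _ & _ & _ & _ & HD & n1 & n2 & n12 & _).
    apply point; auto. }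
  split; [exact P|].
  split; intros H u v Huv; apply (P u v Huv); auto.
Qed.
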